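(* Let $n\ge2$ and $0\le k\le n-2$ be integers, and let $\alpha\in I_{r,n+1}$ with $r>3+k$ and $\alpha_1=n-k$. Then $c^{(n+1)}_\alpha=0$.
   Context: Let $T_1,T_2,\dots$ be indeterminates, $T_\alpha=T_{\alpha_1}\cdots T_{\alpha_d}$. Define linear operators $L,H$ on monomials (constants sent to $0$): $L(T_{\alpha_1}\cdots T_{\alpha_r})=\sum_{1\le i<j\le r}T_{\alpha_1}\cdots T_{\alpha_i+1}\cdots T_{\alpha_j+1}\cdots T_{\alpha_r}$, $H(T_{\alpha_1}\cdots T_{\alpha_r})=-\frac12\sum_{k=1}^{r}\sum_{l=1}^{\alpha_k-1}\binom{\alpha_k}{l}T_{1+l}T_{1+\alpha_k-l}\prod_{i\ne k}T_{\alpha_i}$. For $n\ge2$ let $A_n=-\sum_{k=1}^{n-1}\binom{n}{k}T_{1+k}T_{1+n-k}T_n$; set $R_2=0$, $R_{n+1}=A_n+L(R_n)+H(R_n)$. $I_{r,n}$ is the set of non-increasing $r$-tuples of integers in $\{2,\dots,n-1\}$ with sum $2n$, and $c^{(n)}_\alpha$ is the coefficient of the monomial $T_\alpha$ in $R_n$. *)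

(* Defs.v *)
(* Polynomials in the indeterminates T_1, T_2, ... with
   rational coefficients are represented as finite lists of terms
   (monomial, coefficient); a monomial T_{a_1}...T_{a_r} is the list
   [:: a_1; ...; a_r] (order irrelevant, variables commute). *)
From HB Require Import structures.
From mathcomp Require Import all_boot all_order all_algebra.
Set Implicit Arguments. Unset Strict Implicit. Unset Printing Implicit Defensive.
Import Order.TTheory GRing.Theory Num.Theory.
Local Open Scope ring_scope.

Definition monom := seq nat.
Definition tpoly := seq (monom * rat).

Definition coef (P : tpoly) (alpha : monom) : rat :=
  \sum_(t <- P | perm_eq t.1 alpha) t.2.

Definition L_mon (m : monom) : seq monom :=
  let r := size m in
  flatten [seq [seq [seq (nth 0%N m t + ((t == i) || (t == j)))%N | t <- iota 0 r]
               | j <- iota i.+1 (r - i.+1)] | i <- iota 0 r].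

Definition H_mon (m : monom) : tpoly :=
  let r := size m in
  flatten [seq
    [seq ((1 + l)%N :: (1 + (nth 0%N m k - l))%N
            :: [seq nth 0%N m t | t <- iota 0 r & t != k],
          - (1/2) * ('C(nth 0%N m k, l))%:R)
      | l <- iota 1 (nth 0%N m k).-1]
    | k <- iota 0 r].

Definition Lop (P : tpoly) : tpoly :=
  flatten [seq [seq (m', t.2) | m' <- L_mon t.1] | t <- P].

Definition Hop (P : tpoly) : tpoly :=
  flatten [seq [seq (u.1, t.2 * u.2) | u <- H_mon t.1] | t <- P].

Definition Aop (n : nat) : tpoly :=
  [seq ([:: (1 + k)%N; (1 + (n - k))%N; n], - ('C(n, k))%:R) | k <- iota 1 n.-1].

(* R_2 = 0, R_{n+1} = A_n + L(R_n) + H(R_n) for n >= 2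
   (values at 0, 1 are irrelevant and set to 0) *)
Fixpoint Rpoly (n : nat) : tpoly :=
  match n with
  | 0 | 1 | 2 => [::]
  | m.+1 => Aop m ++ Lop (Rpoly m) ++ Hop (Rpoly m)
  end.

Definition in_I (r n : nat) (alpha : monom) : Prop :=
  size alpha = r /\ sorted geq alpha /\ all (fun a => 2 <= a <= n.-1)%N alpha
  /\ sumn alpha = (2 * n)%N.

(* Main.v *)
Require Import Defs.
From mathcomp Require Import all_boot all_order all_algebra.
From mathcomp Require Import zify.
Local Open Scope ring_scope.

Definition M (s : seq nat) : nat := foldr maxn 0%N s.

Lemma M_le s b : (M s <= b)%N = all (fun x => x <= b)%N s.
Proof. by elim: s => //= x s IH; rewrite geq_max IH. Qed.

Lemma M_ge x s : x \in s -> (x <= M s)%N.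
Proof.
elim: s => //= y s IH; rewrite in_cons => /orP [/eqP ->|/IH h].
  by rewrite leq_maxl.
by apply: (leq_trans h); rewrite leq_maxr.
Qed.

Lemma M_perm s t : perm_eq s t -> M s = M t.
Proof.
move=> p; apply/eqP; rewrite eqn_leq.
apply/andP; split.
  by rewrite M_le (perm_all _ p) -M_le.
by rewrite M_le -(perm_all _ p) -M_le.
Qed.

Lemma L_bound s m' : m' \in L_mon s ->
  size m' = size s /\ (M m' <= (M s).+1)%N.
Proof.
case/flatten_mapP => i _ /mapP [j _ ->]; split.
  by rewrite size_map size_iota.
rewrite M_le; apply/allP => x /mapP [t]; rewrite mem_iota add0n => /andP [_ ht] ->.
have := M_ge _ _ (mem_nth 0%N ht).
by case: (_ || _) => /= h; lia.
Qed.

Lemma H_bound s u : u \in H_mon s ->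
  size u.1 = (size s).+1 /\ (M u.1 <= M s)%N.
Proof.
case/flatten_mapP => k; rewrite mem_iota add0n => /andP [_ hk] /mapP [l].
rewrite mem_iota => /andP [l1 l2] -> /=.
have hn := M_ge _ _ (mem_nth 0%N hk).
split.
  rewrite size_map size_filter.
  have := count_predC (pred1 k) (iota 0 (size s)).
  rewrite (count_uniq_mem _ (iota_uniq _ _)) mem_iota size_iota /= hk.
  have -> : count (predC (pred1 k)) (iota 0 (size s)) =
            count (fun t => t != k) (iota 0 (size s)) by apply: eq_count.
  lia.
rewrite !geq_max; move: l2 hn; case: (nth 0%N s k) => [|a] /= l2 hn; first by lia. apply/and3P; split; [lia|lia|rewrite M_le].
apply/allP => x /mapP [t]; rewrite mem_filter mem_iota.
move=> /andP [_ /andP [_ ht]] ->; rewrite add0n in ht; exact: M_ge _ _ (mem_nth 0%N ht).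
Qed.

Lemma R_inv N : all (fun t : monom * rat => M t.1 + size t.1 <= N.+2)%N (Rpoly N).
Proof.
elim: N => [|N IH] //; case: N IH => [|[|N]] IH //.
have -> : Rpoly N.+3 = Aop N.+2 ++ Lop (Rpoly N.+2) ++ Hop (Rpoly N.+2) by [].
rewrite !all_cat; apply/and3P; split.
- apply/allP => t /mapP [k]; rewrite mem_iota => /andP [k1 k2] -> /=. 
  lia.
- apply/allP => t /flatten_mapP [u uin] /mapP [m' m'in ->] /=.
  have := allP IH u uin; case: (L_bound _ _ m'in) => h1 h2 /=; rewrite h1; lia.
- apply/allP => t /flatten_mapP [u uin] /mapP [v vin ->] /=.
  have := allP IH u uin; case: (H_bound _ _ vin) => h1 h2 /=; move=> h3; rewrite h1 addnS ltnS; apply: leq_trans h3; by rewrite leq_add2r.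
Qed.

Theorem mainTheorem11 (n k r : nat) (alpha : seq nat) :
  (2 <= n)%N -> (k <= n - 2)%N ->
  in_I r n.+1 alpha -> (3 + k < r)%N -> nth 0%N alpha 0 = (n - k)%N ->
  coef (Rpoly n.+1) alpha = 0.
Proof.
move=> hn hk [hs _] hr h0.
rewrite /coef big_seq_cond big1 // => t /andP [tin pe]; exfalso.
have := allP (R_inv n.+1) t tin.
rewrite (M_perm _ _ pe) (perm_size pe) hs.
have : (nth 0%N alpha 0 <= M alpha)%N.
  by apply: M_ge; apply: mem_nth; rewrite hs; lia.
rewrite h0 => h1 h2.
have h3 : (n - k + r <= n.+3)%N by apply: leq_trans h2; rewrite leq_add2r.
lia.
Qed.
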